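(* Let $n\ge2$ and $q_1,q_2\in\mathbb{C}$ with $q_1q_2\ne0$, put $q=-q_2/q_1$, and assume $1+q+\cdots+q^{n-1}\ne0$. Then $\mathbf{E}=\mathbf{L}\oplus\mathbf{F}$, and this is an orthogonal decomposition (with respect to the bilinear form $\langle-,-\rangle$) into $H_n(q_1,q_2)$-submodules, hence also into $\mathbb{C}B_n$-submodules.
   Context: $B_n$ is Artin's braid group with generators $\sigma_1,\dots,\sigma_{n-1}$. The Iwahori--Hecke algebra $H_n(q_1,q_2)$ is generated by $T_1,\dots,T_{n-1}$ subject to the braid relations $T_iT_{i+1}T_i=T_{i+1}T_iT_{i+1}$, $T_iT_j=T_jT_i$ ($|i-j|>1$) and $(T_i-q_1)(T_i-q_2)=0$. Let $\mathbf{E}=\mathbb{C}^n$ with basis $e_1,\dots,e_n$, on which $T_i$ (and $\sigma_i$) act by $e_j\mapsto q_1e_j$ ($j\ne i,i+1$), $e_{i+1}\mapsto-q_2e_i$, $e_i\mapsto(q_1+q_2)e_i+q_1e_{i+1}$ (the generalized Burau representation, which factors through $H_n(q_1,q_2)$). Let $\mathbf{L}=\mathbb{C}(e_1+\cdots+e_n)$ and $\mathbf{F}=\mathrm{span}\{q_2e_i+q_1e_{i+1}:1\le i\le n-1\}$. The symmetric bilinear form on $\mathbf{E}$ is $\langle e_i,e_j\rangle=\delta_{ij}q^{j-1}$. *)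

(* Defs.v *)
From HB Require Import structures.
From mathcomp Require Import all_boot all_order all_algebra.
Set Implicit Arguments. Unset Strict Implicit. Unset Printing Implicit Defensive.
Import Order.TTheory GRing.Theory Num.Theory.
Local Open Scope ring_scope.

(* Conventions: E = C^n is the space of row vectors 'rV[C]_n, with 0-based
   basis e_0,...,e_{n-1} (paper's e_1,...,e_n).  A linear endomorphism is
   represented by a matrix M acting on the right: v |-> v *m M, so row j of M
   is the image of e_j.  Generator i (0-based, i < n-1) is the paper's T_{i+1}. *)

(* The matrix of T_{i+1} in the generalized Burau representation:
   e_j |-> q1 e_j (j <> i, i+1), e_{i+1} |-> -q2 e_i,
   e_i |-> (q1+q2) e_i + q1 e_{i+1}. *)
Definition burauT (C : fieldType) (n : nat) (q1 q2 : C) (i : nat) : 'M[C]_n :=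
  \matrix_(j < n, k < n)
    if j == i :> nat then
      (if k == i :> nat then q1 + q2 else if k == i.+1 :> nat then q1 else 0)
    else if j == i.+1 :> nat then
      (if k == i :> nat then - q2 else 0)
    else (if k == j then q1 else 0).

Definition burauL (C : fieldType) (n : nat) : 'M[C]_(1, n) := const_mx 1.

(* F = span { q2 e_i + q1 e_{i+1} : 1 <= i <= n-1 }, rows of this matrix. *)
Definition burauF (C : fieldType) (n : nat) (q1 q2 : C) : 'M[C]_(n.-1, n) :=
  \matrix_(j < n.-1, k < n)
    if k == j :> nat then q2 else if k == j.+1 :> nat then q1 else 0.

(* The symmetric bilinear form <e_i, e_j> = delta_ij q^(j-1) (1-based),
   i.e. q^j for 0-based index j. *)
Definition burauForm (C : fieldType) (n : nat) (q : C) (u v : 'rV[C]_n) : C :=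
  \sum_(j < n) u 0 j * v 0 j * q ^+ j.

(* Main.v *)
Require Import Defs.
From HB Require Import structures.
From mathcomp Require Import all_boot all_order all_algebra.
From mathcomp Require Import ring zify.
Import Order.TTheory GRing.Theory Num.Theory.
Local Open Scope ring_scope.
Set Implicit Arguments. Unset Strict Implicit.

Section H.
Variable C : fieldType.

Lemma sum_one n (f : 'I_n -> C) a : (forall j, j != a -> f j = 0) -> \sum_j f j = f a.
Proof. by move=> H; rewrite (bigD1 a) //= big1 ?addr0. Qed.

Lemma sum_two n (f : 'I_n -> C) a b : a != b ->
  (forall j, j != a -> j != b -> f j = 0) -> \sum_j f j = f a + f b.
Proof.
move=> ab H; rewrite (bigD1 a) //= (bigD1 b) 1?eq_sym //= big1 ?addr0 ?addrA //.
by move=> j /andP[ja jb]; apply: H.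
Qed.

Lemma inv_stable n (A : 'M[C]_(n, n)) m (X : 'M[C]_(m, n)) :
  A \in unitmx -> (X *m A <= X)%MS -> (X *m invmx A <= X)%MS.
Proof.
move=> uA sub.
have: (X *m A == X)%MS.
  by rewrite -(mxrank_leqif_eq sub) mxrankMfree // row_free_unit.
move=> /andP[_ h].
have := submxMr (invmx A) h; rewrite mulmxK //.
Qed.

Definition ev n (j : nat) : 'rV[C]_n := \row_k (k == j :> nat)%:R.

Lemma ev_delta n (j : 'I_n) : ev n j = delta_mx 0 j.
Proof. by apply/matrixP => a k; rewrite !mxE ord1 eqxx. Qed.


Variables (n : nat) (q1 q2 : C) (i : nat).
Hypothesis hi : (i.+1 < n)%N.
Let T := burauT n q1 q2 i.

Lemma eT_far j : (j < n)%N -> j != i -> j != i.+1 -> ev n j *m T = q1 *: ev n j.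
Proof.
move=> jn ji ji1; rewrite (ev_delta (Ordinal jn)) -rowE; apply/matrixP => a k; rewrite ord1.
rewrite !mxE /= (negbTE ji) (negbTE ji1) -val_eqE /=.
by case: (_ == _); rewrite ?mulr1 ?mulr0.
Qed.

Lemma eT_i : ev n i *m T = (q1 + q2) *: ev n i + q1 *: ev n i.+1.
Proof.
have ilt : (i < n)%N by apply: ltnW.
rewrite (ev_delta (Ordinal ilt)) -rowE; apply/matrixP => a k; rewrite ord1.
rewrite !mxE /= eqxx -val_eqE /=.
have [->|ki] := eqVneq (k : nat) i.
  by rewrite ltn_eqF // mulr1 mulr0 addr0.
by case: (_ == _); rewrite ?mulr0 ?mulr1 ?add0r ?addr0.
Qed.

Lemma eT_i1 : ev n i.+1 *m T = - q2 *: ev n i.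
Proof.
rewrite (ev_delta (Ordinal hi)) -rowE; apply/matrixP => a k; rewrite ord1.
rewrite !mxE /= eqxx (gtn_eqF (ltnSn i)).
by case: (_ == _); rewrite ?mulr1 ?mulr0.
Qed.

Definition fv (r : nat) : 'rV[C]_n := q2 *: ev n r + q1 *: ev n r.+1.

Lemma rowF (r : 'I_n.-1) : row r (burauF n q1 q2) = fv r.
Proof.
apply/matrixP => a k; rewrite ord1 !mxE /=.
have [->|kr] := eqVneq (k : nat) r.
  by rewrite ltn_eqF // mulr1 mulr0 addr0.
by case: (_ == _); rewrite ?mulr0 ?mulr1 ?add0r ?addr0.
Qed.

Lemma fv_sub r : (r < n.-1)%N -> (fv r <= burauF n q1 q2)%MS.
Proof. by move=> h; rewrite -(rowF (Ordinal h)) row_sub. Qed.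

Lemma FT : (burauF n q1 q2 *m T <= burauF n q1 q2)%MS.
Proof.
have ii : (i < n.-1)%N by lia.
apply/row_subP => r; rewrite row_mul rowF /fv mulmxDl -!scalemxAl.
have rn1 : (r.+1 < n)%N by have := ltn_ord r; lia.
have rn : (r < n)%N by apply: ltnW.
have [ri|ri] := eqVneq (r : nat) i.
  rewrite ri eT_i eT_i1.
  have -> : q2 *: ((q1 + q2) *: ev n i + q1 *: ev n i.+1) + q1 *: (- q2 *: ev n i)
     = q2 *: fv i by apply/matrixP => a k; rewrite !mxE; ring.
  by rewrite scalemx_sub // fv_sub.
have [ri1|ri1] := eqVneq (r : nat).+1 i.
  rewrite (eT_far rn) //; last by rewrite -ri1 ltn_eqF // ltnW.
  rewrite ri1 eT_i -ri1; rewrite -ri1 in ii.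
  have -> : q2 *: (q1 *: ev n r) + q1 *: ((q1 + q2) *: ev n r.+1 + q1 *: ev n r.+2)
     = q1 *: fv r + q1 *: fv r.+1 by apply/matrixP => a k; rewrite !mxE; ring.
  by rewrite addmx_sub // scalemx_sub // fv_sub // ltnW.
have [ri2|ri2] := eqVneq (r : nat) i.+1.
  rewrite (eT_far rn1) //.
  rewrite ri2 eT_i1.
  have -> : q2 *: (- q2 *: ev n i) + q1 *: (q1 *: ev n i.+2)
     = - q2 *: fv i + q1 *: fv i.+1 by apply/matrixP => a k; rewrite !mxE; ring.
  by rewrite addmx_sub // scalemx_sub // fv_sub // -ri2.
rewrite !eT_far //.
have -> : q2 *: (q1 *: ev n r) + q1 *: (q1 *: ev n r.+1)
     = q1 *: fv r by apply/matrixP => a k; rewrite !mxE; ring.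
by rewrite scalemx_sub // fv_sub.
Qed.

Lemma LT : burauL C n *m T = q1 *: burauL C n.
Proof.
have ilt : (i < n)%N by apply: ltnW.
apply/matrixP => a k; rewrite ord1 !mxE.
under eq_bigr => j _ do rewrite !mxE mul1r.
rewrite mulr1.
have ab : Ordinal ilt != Ordinal hi by rewrite -val_eqE /= ltn_eqF.
have [ki|ki] := eqVneq (k : nat) i.
  rewrite (sum_two ab) /= ?eqxx ?ki ?eqxx ?(gtn_eqF (ltnSn i)) ?eqxx; first by rewrite addrK.
  move=> j; rewrite -!val_eqE /= => ji ji1; rewrite (negbTE ji) (negbTE ji1).
  by case: eqP => // kj; move: ji; rewrite -kj ki eqxx.
have [ki1|ki1] := eqVneq (k : nat) i.+1.
  rewrite (sum_one (a := Ordinal ilt)) /= ?eqxx ?ki1 ?eqxx //.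
  move=> j; rewrite -!val_eqE /= => ji; rewrite (negbTE ji).
  by case: ifP => // /negbT ji1; case: eqP => // kj; move: ji1; rewrite -kj ki1 eqxx.
rewrite (sum_one (a := k)) /= ?eqxx ?(negbTE ki) ?(negbTE ki1) //.
move=> j jk; do 2 case: ifP => // _; by rewrite eq_sym (negbTE jk).
Qed.

Lemma Tunit : q1 != 0 -> q2 != 0 -> T \in unitmx.
Proof.
move=> nq1 nq2.
have ilt : (i < n)%N by apply: ltnW.
rewrite -row_full_unit -sub1mx; apply/row_subP => j; rewrite row1 -ev_delta.
have ei : (ev n i <= T)%MS.
  have -> : ev n i = (- q2)^-1 *: (ev n i.+1 *m T).
    by rewrite eT_i1 scalerA mulVf ?scale1r // oppr_eq0.
  by rewrite scalemx_sub // submxMl.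
have [->|ji] := eqVneq (j : nat) i; first exact: ei.
have [->|ji1] := eqVneq (j : nat) i.+1.
  have -> : ev n i.+1 = q1^-1 *: (ev n i *m T) + (- (q1 + q2) / q1) *: ev n i.
    rewrite eT_i; apply/matrixP => a k; rewrite !mxE; field; exact: nq1.
  by rewrite addmx_sub // scalemx_sub // submxMl.
have -> : ev n j = q1^-1 *: (ev n j *m T).
  by rewrite eT_far // scalerA mulVf ?scale1r.
by rewrite scalemx_sub // submxMl.
Qed.
End H.

Section G.
Variable C : fieldType.
Variables (n : nat) (q1 q2 : C).
Hypothesis n2 : (2 <= n)%N.

Lemma Finner (r : 'I_n.-1) : q1 != 0 ->
  \sum_(j < n) burauF n q1 q2 r j * (- q2 / q1) ^+ j = 0.
Proof.
move=> nq1.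
have h1 : (r < n)%N by have := ltn_ord r; lia.
have h2 : (r.+1 < n)%N by have := ltn_ord r; lia.
have ab : Ordinal h1 != Ordinal h2 by rewrite -val_eqE /= ltn_eqF.
rewrite (sum_two ab) /=; last first.
  move=> j; rewrite -!val_eqE /= => ja jb; rewrite mxE.
  by rewrite (negbTE ja) (negbTE jb) mul0r.
rewrite !mxE /= eqxx (gtn_eqF (ltnSn r)) eqxx exprS; field; exact: nq1.
Qed.

Lemma orth (u v : 'rV[C]_n) : q1 != 0 ->
  (u <= burauL C n)%MS -> (v <= burauF n q1 q2)%MS -> burauForm (- q2 / q1) u v = 0.
Proof.
move=> nq1 /submxP[D ->] /submxP[w ->]; rewrite /burauForm.
transitivity (\sum_(j < n) \sum_(r < n.-1)
   D 0 0 * w 0 r * (burauF n q1 q2 r j * (- q2 / q1) ^+ j)).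
  apply: eq_bigr => j _; rewrite !mxE big_ord1 !mxE mulr1 mulr_sumr mulr_suml.
  by apply: eq_bigr => r _; rewrite mxE; ring.
rewrite exchange_big big1 // => r _; by rewrite -mulr_sumr Finner // mulr0.
Qed.

Lemma Ffree : q1 != 0 -> q2 != 0 -> row_free (burauF n q1 q2).
Proof.
move=> nq1 nq2; apply: inj_row_free => v vF.
have col c : \sum_(r < n.-1) v 0 r * burauF n q1 q2 r c = 0.
  by have := congr1 (fun M : 'M[C]_(1, n) => M 0 c) vF; rewrite !mxE.
have P k (hk : (k < n.-1)%N) : v 0 (Ordinal hk) = 0.
  elim: k hk => [|k IH] hk.
    have h0 : (0 < n)%N by lia.
    have := col (Ordinal h0); rewrite (sum_one (a := Ordinal hk)) /=; last first.
      move=> j; rewrite -val_eqE /= => jn; rewrite mxE /= eq_sym (negbTE jn).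
      by rewrite mulr0.
    rewrite mxE /= => /eqP; rewrite mulf_eq0 (negbTE nq2) orbF => /eqP.
    by [].
  have hk' : (k < n.-1)%N by lia.
  have hc : (k.+1 < n)%N by lia.
  have ab : Ordinal hk' != Ordinal hk by rewrite -val_eqE /= ltn_eqF.
  have := col (Ordinal hc); rewrite (sum_two ab) /=; last first.
    move=> j; rewrite -!val_eqE /= => ja jb; rewrite mxE /=.
    by rewrite eq_sym (negbTE jb) eqSS eq_sym (negbTE ja) mulr0.
  rewrite !mxE /= IH mul0r add0r eqxx => /eqP.
  by rewrite mulf_eq0 (negbTE nq2) orbF => /eqP.
apply/matrixP => a r; rewrite ord1 mxE.
by rewrite -(P r (ltn_ord r)); congr (v 0 _); apply: val_inj.
Qed.
End G.

Unset Implicit Arguments.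

Theorem corollary3p6 (C : numClosedFieldType) (n : nat) (q1 q2 : C) :
  (2 <= n)%N ->
  q1 * q2 != 0 ->
  let q := - q2 / q1 in
  \sum_(k < n) q ^+ k != 0 ->
  let L := burauL C n in
  let F := burauF n q1 q2 in
  (* E = L (+) F : the sum is direct and equals the whole space *)
  [/\ mxdirect (L + F)%MS,
      (L + F :=: (1%:M : 'M[C]_n))%MS,
  (* orthogonality with respect to <-,-> *)
      (forall u v : 'rV[C]_n, (u <= L)%MS -> (v <= F)%MS -> burauForm q u v = 0),
  (* H_n(q1,q2)-submodules: stable under every generator T_i *)
      (forall i : nat, (i.+1 < n)%N ->
         (L *m burauT n q1 q2 i <= L)%MS /\ (F *m burauT n q1 q2 i <= F)%MS)
  (* C B_n-submodules: also stable under the inverses sigma_i^{-1} *)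
    & (forall i : nat, (i.+1 < n)%N ->
         (L *m invmx (burauT n q1 q2 i) <= L)%MS /\
         (F *m invmx (burauT n q1 q2 i) <= F)%MS)].
Proof.
move=> n2 nq q sq L F.
have nq1 : q1 != 0 by apply: contraNneq nq => ->; rewrite mul0r.
have nq2 : q2 != 0 by apply: contraNneq nq => ->; rewrite mulr0.
have ort : forall u v : 'rV[C]_n, (u <= L)%MS -> (v <= F)%MS -> burauForm q u v = 0.
  by move=> u v; apply: orth.
have stab : forall i : nat, (i.+1 < n)%N ->
    (L *m burauT n q1 q2 i <= L)%MS /\ (F *m burauT n q1 q2 i <= F)%MS.
  move=> i hi; split; last exact: FT.
  by rewrite /L (LT q1 q2 hi) scalemx_sub.
have rL : \rank L = 1%N.
  rewrite rank_rV; case: eqP => // /matrixP /(_ 0 (Ordinal (ltnW n2))).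
  by rewrite !mxE => /eqP; rewrite oner_eq0.
have rF : \rank F = n.-1 by apply/eqP; exact: Ffree.
have cap0 : (L :&: F)%MS = 0.
  apply/eqP; rewrite -mxrank_eq0.
  have := mxrankS (capmxSl L F); rewrite rL.
  case: (\rank (L :&: F)) (mxrank_leqif_sup (capmxSl L F)) => // [[|//]] h _.
  have LF : (L <= F)%MS.
    apply: submx_trans (capmxSr L F); rewrite -(h.2); by rewrite rL.
  have := ort L L (submx_refl L) LF.
  move=> e; suff : \sum_(k < n) q ^+ k = 0 by move/eqP; rewrite (negbTE sq).
  rewrite -[in RHS]e /burauForm; apply: eq_bigr => k _; by rewrite !mxE !mul1r.
split => //.
- exact/mxdirect_addsP.
- apply/eqmxP; rewrite submx1 sub1mx /row_full mxrank_disjoint_sum // rL rF.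
  by rewrite add1n prednK //; lia.
- move=> i hi; have [sL sF] := stab i hi.
  have u := @Tunit _ n q1 q2 i hi nq1 nq2.
  by split; apply: inv_stable.
Qed.
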